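(* Let $m,n\ge 1$, let $a_1,\dots,a_n\in\mathbb{C}$ be distinct, let $m_1,\dots,m_n\ge1$ be integers, and let $c_0,\dots,c_{m-1},b_k^{(j)}\in\mathbb{C}$. Let $$r(\lambda)=\lambda^m-c_{m-1}\lambda^{m-1}-\cdots-c_1\lambda-c_0-\sum_{j=1}^n\sum_{k=1}^{m_j}\frac{b_k^{(j)}}{(\lambda-a_j)^k},$$ and let $\mathcal{C}_r$ be its associated block matrix (defined in the context). Then every zero of $r(\lambda)$ is an eigenvalue of $\mathcal{C}_r$.
   Context: A zero of $r$ is a $\lambda_0\in\mathbb{C}\setminus\{a_1,\dots,a_n\}$ with $r(\lambda_0)=0$. Let $N=m+\sum_{j}\frac{m_j(m_j+1)}2$. The associated block matrix is the $N\times N$ matrix $$\mathcal{C}_r=\begin{bmatrix}\mathcal{A}_n&0&\cdots&0&-\mathcal{F}_n\\ 0&\mathcal{A}_{n-1}&\cdots&0&-\mathcal{F}_{n-1}\\ \vdots&&\ddots&&\vdots\\ 0&0&\cdots&\mathcal{A}_1&-\mathcal{F}_1\\ \mathcal{B}_n&\mathcal{B}_{n-1}&\cdots&\mathcal{B}_1&\mathcal{B}_0\end{bmatrix},$$ where for $1\le j\le n$: $\mathcal{A}_j=\mathrm{diag}(A^{(j)}_{m_j},\dots,A^{(j)}_1)$ with $A^{(j)}_k$ the $k\times k$ upper bidiagonal matrix with $a_j$ on the diagonal and $1$ on the superdiagonal; $\mathcal{F}_j=\begin{bmatrix}F_{m_j}\\ \vdots\\ F_1\end{bmatrix}$ with $F_k$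 the $k\times m$ matrix whose only nonzero entry is $1$ in position $(k,1)$; $\mathcal{B}_j=\begin{bmatrix}B^{(j)}_{m_j}&\cdots&B^{(j)}_1\end{bmatrix}$ with $B^{(j)}_k$ the $m\times k$ matrix whose only nonzero entry is $-b^{(j)}_k$ in position $(m,1)$; and $\mathcal{B}_0$ is the $m\times m$ companion matrix with $1$'s on the superdiagonal, last row $(c_0,c_1,\dots,c_{m-1})$, and zeros elsewhere. *)

(* Defs.v *)
From HB Require Import structures.
From mathcomp Require Import all_boot all_order all_algebra.
From mathcomp Require Import reals Rstruct complex.
Set Implicit Arguments. Unset Strict Implicit. Unset Printing Implicit Defensive.
Import Order.TTheory GRing.Theory Num.Theory.
Local Open Scope ring_scope.

Definition Cplx : fieldType := (Rdefinitions.R)[i].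

Section BlockMatrix.
Variables (m n : nat).
(* Indexing convention: the paper's index j in {1..n} is the ordinal j-1 : 'I_n;
   a j = a_{j+1}, mult j = m_{j+1}, b j k = b_k^{(j+1)} (k is 1-based),
   c i = c_i for i : 'I_m. *)
Variables (a : 'I_n -> Cplx) (mult : 'I_n -> nat) (b : 'I_n -> nat -> Cplx)
          (c : 'I_m -> Cplx).

Definition bidiag (x : Cplx) (k : nat) : 'M[Cplx]_k :=
  \matrix_(i < k, l < k) (if l == i then x else if (l == i.+1 :> nat) then 1 else 0).

Definition Fmx (k : nat) : 'M[Cplx]_(k, m) :=
  \matrix_(i < k, l < m) (if ((i == k.-1 :> nat) && (l == 0 :> nat)) then 1 else 0).

Definition Bmx (bk : Cplx) (k : nat) : 'M[Cplx]_(m, k) :=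
  \matrix_(i < m, l < k) (if ((i == m.-1 :> nat) && (l == 0 :> nat)) then - bk else 0).

Definition companion : 'M[Cplx]_m :=
  \matrix_(i < m, l < m)
    (if (i == m.-1 :> nat) then c l else if (l == i.+1 :> nat) then 1 else 0).

(* Block ordering: the outer blocks are listed j = n, n-1, ..., 1, i.e. the
   position p : 'I_n corresponds to the paper's index j = n - p (ordinal rev_ord p);
   inside block j the sub-blocks are listed k = m_j, m_j - 1, ..., 1, i.e. the
   position q : 'I_(m_j) corresponds to k = m_j - q. *)
Definition jj (p : 'I_n) : 'I_n := rev_ord p.
Definition ksz (p : 'I_n) (q : 'I_(mult (jj p))) : nat := (mult (jj p) - q)%N.
Definition jsz (p : 'I_n) : nat := (\sum_(q < mult (jj p)) ksz q)%N.

Definition calA (p : 'I_n) : 'M[Cplx]_(jsz p) :=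
  \mxdiag_(q < mult (jj p)) bidiag (a (jj p)) (ksz q).
Definition calF (p : 'I_n) : 'M[Cplx]_(jsz p, m) :=
  \mxcol_(q < mult (jj p)) Fmx (ksz q).
Definition calB (p : 'I_n) : 'M[Cplx]_(m, jsz p) :=
  \mxrow_(q < mult (jj p)) Bmx (b (jj p) (ksz q)) (ksz q).

Definition Cr : 'M[Cplx]_((\sum_(p < n) jsz p) + m) :=
  block_mx (\mxdiag_(p < n) calA p) (- \mxcol_(p < n) calF p)
           (\mxrow_(p < n) calB p) companion.

Definition r_fun (lam : Cplx) : Cplx :=
  lam ^+ m - \sum_(i < m) c i * lam ^+ i
  - \sum_(j < n) \sum_(k < mult j) b j k.+1 / (lam - a j) ^+ k.+1.

Definition is_zero_of_r (lam : Cplx) : Prop :=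
  (forall j : 'I_n, lam != a j) /\ r_fun lam = 0.
End BlockMatrix.

(* Main.v *)
Require Import Defs.
From HB Require Import structures.
From mathcomp Require Import all_boot all_order all_algebra.
From mathcomp Require Import reals Rstruct complex.
From mathcomp Require Import ring zify.
Import Order.TTheory GRing.Theory Num.Theory.
Local Open Scope ring_scope.
Set Implicit Arguments. Unset Strict Implicit. Unset Printing Implicit Defensive.

Lemma eig_of_col N (g : 'M[Cplx]_N) lam (x : 'cV_N) :
  x != 0 -> g *m x = lam *: x -> eigenvalue g lam.
Proof.
move=> nx hx; rewrite /eigenvalue /eigenspace kermx_eq0 row_free_unit.
apply/negP => U.
have h0 : (g - lam%:M) *m x = 0 by rewrite mulmxBl mul_scalar_mx hx subrr.
move/(congr1 (mulmx (invmx (g - lam%:M)))): h0.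
by rewrite mulKmx // mulmx0 => x0; rewrite x0 eqxx in nx.
Qed.

Lemma sum_if1 (k t : nat) (g : nat -> Cplx) :
  \sum_(l < k) (if (l == t :> nat) then g l else 0) = if (t < k)%N then g t else 0.
Proof.
case: ltnP => h.
  rewrite (bigD1 (Ordinal h)) //= eqxx big1 ?addr0 // => l hl.
  case: eqP => // e; exfalso; move/eqP: hl; apply; exact: val_inj.
by apply: big1 => l _; rewrite ltn_eqF // (leq_trans (ltn_ord l) h).
Qed.

Section S.
Variable m : nat.
Hypothesis hm : (0 < m)%N.

Definition wf (e : Cplx) (k i : nat) : Cplx := (- e) ^+ (k.-1 - i) * e.
Definition wv (e : Cplx) (k : nat) : 'cV[Cplx]_k := \col_(i < k) wf e k i.
Definition zv (lam : Cplx) : 'cV[Cplx]_m := \col_(i < m) lam ^+ i.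

Lemma Fz k lam (i : 'I_k) j : (Fmx m k *m zv lam) i j = if (i == k.-1 :> nat) then 1 else 0.
Proof.
rewrite !mxE.
under eq_bigr => l _ do rewrite !mxE.
case: eqP => _ /=.
  under eq_bigr => l _ do rewrite (fun_if (fun v => v * _)) mul0r mul1r.
  by rewrite (sum_if1 _ _ (fun l => lam ^+ l)) hm expr0.
by apply: big1 => l _; rewrite mul0r.
Qed.

Lemma Bw bk k e (hk : (0 < k)%N) (r : 'I_m) j :
  (Bmx m bk k *m wv e k) r j = if (r == m.-1 :> nat) then - bk * wf e k 0 else 0.
Proof.
rewrite !mxE.
under eq_bigr => l _ do rewrite !mxE.
case: eqP => _ /=.
  under eq_bigr => l _ do rewrite (fun_if (fun v => v * _)) mul0r.
  by rewrite (sum_if1 _ _ (fun l => - bk * wf e k l)) hk.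
by apply: big1 => l _; rewrite mul0r.
Qed.

Lemma compz c lam (r : 'I_m) j :
  (companion c *m zv lam) r j =
  if (r == m.-1 :> nat) then \sum_(i < m) c i * lam ^+ i else lam ^+ r.+1.
Proof.
rewrite !mxE.
under eq_bigr => l _ do rewrite !mxE.
case: eqP => hr /=; first by [].
under eq_bigr => l _ do rewrite (fun_if (fun v => v * _)) mul0r mul1r.
rewrite (sum_if1 _ _ (fun l => lam ^+ l)); case: ltnP => // h; exfalso; apply: hr.
by have := ltn_ord r; move: h; lia.
Qed.
Lemma bidiag_eq x lam k (hx : x != lam) :
  bidiag x k *m wv ((x - lam)^-1) k - Fmx m k *m zv lam = lam *: wv ((x - lam)^-1) k.
Proof.
set e := (x - lam)^-1.
apply/matrixP => i j.
rewrite [LHS]mxE [X in _ + X]mxE Fz [RHS]mxE !mxE.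
have E : forall l : 'I_k, bidiag x k i l * wv e k l j =
   (if (l == i :> nat) then x * wf e k l else 0) + (if (l == i.+1 :> nat) then wf e k l else 0).
  move=> l; rewrite !mxE val_eqE; case: (eqVneq l i) => [->|ne].
    by rewrite (_ : (i == i.+1 :> nat) = false) ?addr0 //; lia.
  by case: eqP => _; rewrite ?mul1r ?mul0r ?add0r.
rewrite (eq_bigr _ (fun l _ => E l)) big_split /=.
rewrite (sum_if1 _ _ (fun l => x * wf e k l)) (sum_if1 _ _ (fun l => wf e k l)) ltn_ord.
have hxl : x - lam != 0 by rewrite subr_eq0.
rewrite /wf; case: ltnP => h.
  rewrite (_ : (i == k.-1 :> nat) = false); last by lia.
  rewrite (_ : (k.-1 - i = (k.-1 - i.+1).+1)%N); last by lia.
  rewrite exprS; set E1 := (- e) ^+ _; rewrite /e; field; exact: hxl.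
have := ltn_ord i => hi.
rewrite (_ : (i == k.-1 :> nat) = true); last by lia.
rewrite (_ : (k.-1 - i = 0)%N); last by lia.
rewrite expr0 /e; field; exact: hxl.
Qed.
Lemma mxcol_eig K (p_ : 'I_K -> nat) (A_ : forall i, 'M[Cplx]_(p_ i))
  (F_ : forall i, 'M[Cplx]_(p_ i, m)) (Y_ : forall i, 'cV[Cplx]_(p_ i)) (z : 'cV_m) lam :
 (forall i, A_ i *m Y_ i - F_ i *m z = lam *: Y_ i) ->
 \mxdiag_i A_ i *m \mxcol_i Y_ i - \mxcol_i F_ i *m z = lam *: \mxcol_i Y_ i.
Proof.
move=> h; rewrite mul_mxdiag_mxcol mxcol_mul -mxcolB -mul_scalar_mx -(@mxdiagZ _ _ p_).
rewrite mul_mxdiag_mxcol; apply: eq_mxcol => i; by rewrite mul_scalar_mx h.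
Qed.

Lemma aux_pow (F : fieldType) (bb e f : F) K : e = - f ->
  - bb * ((- e) ^+ K * e) = bb * (f ^+ K.+1).
Proof. by move=> ->; rewrite opprK mulrN mulrNN exprSr. Qed.

Lemma inner_sum (M : nat) (bb : nat -> Cplx) (x lam : Cplx) (hx : x != lam) :
  \sum_(q < M) - bb (M - q)%N * wf ((x - lam)^-1) (M - q) 0
  = \sum_(k < M) bb k.+1 / (lam - x) ^+ k.+1.
Proof.
rewrite [RHS](reindex_inj rev_ord_inj) /=; apply: eq_bigr => q _.
rewrite subnSK //; set K := (M - q)%N.
have hK : (0 < K)%N by rewrite /K subn_gt0.
have he : (x - lam)^-1 = - (lam - x)^-1 by rewrite -invrN opprB.
rewrite /wf subn0; case: K hK => // K' _ /=.
apply: etrans (aux_pow _ K' he) _.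
by rewrite exprVn.
Qed.
End S.

Theorem corollary3p2 (m n : nat) (a : 'I_n -> Cplx) (mult : 'I_n -> nat)
    (b : 'I_n -> nat -> Cplx) (c : 'I_m -> Cplx) :
  (1 <= m)%N -> (1 <= n)%N -> injective a -> (forall j, 1 <= mult j)%N ->
  forall lam0 : Cplx, is_zero_of_r a mult b c lam0 ->
  eigenvalue (Cr a mult b c) lam0.
Proof.
move=> hm hn _ _ lam [hpole hr].
set e := fun p : 'I_n => (a (jj p) - lam)^-1.
pose Yp := fun p : 'I_n => (\mxcol_(q < mult (jj p)) wv (e p) (ksz q)) : 'cV[Cplx]_(jsz mult p).
pose Y := \mxcol_(p < n) Yp p.
have hne : forall p, a (jj p) != lam by move=> p; rewrite eq_sym hpole.
apply: (@eig_of_col _ _ _ (col_mx Y (zv m lam))).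
  rewrite col_mx_eq0 negb_and; apply/orP; right; apply/negP => /eqP /matrixP.
  move/(_ (Ordinal hm) 0); rewrite !mxE expr0 => /eqP; by rewrite oner_eq0.
rewrite /Cr mul_block_col scale_col_mx; congr col_mx.
  rewrite mulNmx; apply: mxcol_eig => p; apply: mxcol_eig => q.
  exact: bidiag_eq.
rewrite mul_mxrow_mxcol; apply/matrixP => r j.
rewrite mxE (compz hm) summxE.
under eq_bigr => p _ do rewrite mul_mxrow_mxcol summxE.
rewrite [in RHS]mxE [in RHS]mxE.
have kpos : forall p (q : 'I_(mult (jj p))), (0 < ksz q)%N.
  by move=> p q; rewrite /ksz subn_gt0.
under eq_bigr => p _ do under eq_bigr => q _ do rewrite (Bw _ _ (kpos p q)).
case: eqP => hr1; last first.
  by rewrite big1 ?add0r -?exprS // => p _; rewrite big1.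
have step : forall p, \sum_(q < mult (jj p)) (- b (jj p) (ksz q) * wf (e p) (ksz q) 0)
   = \sum_(k < mult (jj p)) b (jj p) k.+1 / (lam - a (jj p)) ^+ k.+1.
  by move=> p; exact: inner_sum.
rewrite (eq_bigr _ (fun p _ => step p)).
have rev : forall G : 'I_n -> Cplx, \sum_p G (jj p) = \sum_p G p.
  by move=> G; rewrite (reindex_inj rev_ord_inj); apply: eq_bigr => p _; rewrite /jj rev_ordK.
rewrite (rev (fun j => \sum_(k < mult j) b j k.+1 / (lam - a j) ^+ k.+1)).
rewrite -exprS hr1 (prednK hm).
move: hr; rewrite /r_fun => hr.
by move/eqP: hr; rewrite subr_eq0 subr_eq => /eqP ->.
Qed.
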